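(* Let $p$ be a prime. Then $\mathcal{M}_p^{(0)}=\{n\in\{1,2,6,42,1806\} : p\equiv 1\pmod{n}\}$.
   Context: For positive integers $k,n$ let $S_k(n)=\sum_{i=1}^{n} i^k$. For an integer $a$, $\mathcal{M}_a$ denotes the set of positive integers $n$ such that $S_n(n)\equiv a\pmod{n}$ (it is known that $\mathcal{M}_1=\{1,2,6,42,1806\}$). For a prime $p$, $\mathcal{M}_p^{(0)}=\{n\in\mathcal{M}_p : p\nmid n\}$. *)

(* Defs.v *)
From mathcomp Require Import all_boot.
Set Implicit Arguments. Unset Strict Implicit. Unset Printing Implicit Defensive.

Definition S (k n : nat) : nat := \sum_(1 <= i < n.+1) i ^ k.

(* M_a for a natural number a (the integer a is nonnegative here): positive n
   with S_n(n) = a (mod n). *)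
Definition inM (a n : nat) : bool := (0 < n) && (S n n == a %[mod n]).

Definition inM0 (p n : nat) : bool := inM p n && ~~ (p %| n).

(* Main.v *)
Require Import Defs.
From mathcomp Require Import all_boot all_order all_algebra all_field zify.
Import GRing.Theory.

Section RingPart.
Local Open Scope ring_scope.
Lemma Fp_eq q (pq : prime q) a b : ((a%:R : 'F_q) == b%:R) = (a == b %[mod q])%N.
Proof.
apply/eqP/eqP => H.
  by move/(congr1 val): H; rewrite /= !val_Fp_nat.
by apply: val_inj; rewrite /= !val_Fp_nat // H.
Qed.

Lemma pow_gcd (R : pzRingType) (x : R) a b : (0 < a)%N -> x ^+ a = 1 -> x ^+ b = 1 ->
  x ^+ (gcdn a b) = 1.
Proof.
move=> a0 xa xb; have [c _ /dvdnP[t Ht]] := Bezoutl b a0.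
have : x ^+ (gcdn a b + c * b) = 1 by rewrite Ht mulnC exprM xa expr1n.
by rewrite exprD mulnC exprM xb expr1n mulr1.
Qed.

Lemma fermat q (pq : prime q) (a : 'F_q) : a != 0 -> a ^+ q.-1 = 1.
Proof.
move=> a0; apply: (mulIf a0); rewrite mul1r -exprSr prednK ?prime_gt0 //.
by have := expf_card a; rewrite card_Fp.
Qed.

Lemma exists_nonroot q (pq : prime q) k : ~~ (q.-1 %| k)%N ->
  exists a : 'F_q, (a != 0) && (a ^+ k != 1).
Proof.
move=> nd.
case: (boolP [exists a : 'F_q, (a != 0) && (a ^+ k != 1)]) => [/existsP//|/existsPn H].
exfalso.
have q1 : (0 < q.-1)%N by have := prime_gt1 pq; lia.
set d := gcdn q.-1 k.
have Hd : forall a : 'F_q, a != 0 -> a ^+ d = 1.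
  move=> a a0; apply: pow_gcd => //; first exact: fermat.
  by have := H a; rewrite a0 /= negbK => /eqP.
have dlt : (d < q.-1)%N.
  rewrite ltn_neqAle dvdn_leq ?dvdn_gcdl // andbT.
  by apply: contra nd => /eqP {1}<-; rewrite dvdn_gcdr.
have d0 : (0 < d)%N by rewrite gcdn_gt0 q1.
have := @max_poly_roots _ ('X^d - 1%:P) (enum (predC1 (0 : 'F_q))).
rewrite size_XnsubC // -cardE cardC1 card_Fp // ltnS leqNgt dlt.
move=> Hm; suff : false by []; apply: Hm; first by rewrite monic_neq0 // monicXnsubC.
  by apply/allP => a; rewrite mem_enum /= => a0; rewrite rootE !hornerE Hd // subrr.
exact: enum_uniq.
Qed.

Lemma sum_pow q (pq : prime q) k : (0 < k)%N ->
  \sum_(a : 'F_q) a ^+ k = if (q.-1 %| k)%N then -1 else 0.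
Proof.
move=> k0; case: ifP => dk.
  rewrite (bigD1 0) //= expr0n /= gtn_eqF // add0r.
  rewrite (eq_bigr (fun _ => 1)); last first.
    move=> a a0; case/dvdnP: dk => t ->; by rewrite mulnC exprM fermat // expr1n.
  rewrite sumr_const cardC1 card_Fp //.
  apply/eqP; rewrite -addr_eq0 -(natrD _ _ 1) addn1 prednK ?prime_gt0 //.
  by rewrite pchar_Fp_0.
have [a /andP[a0 ak]] := @exists_nonroot q pq _ (negbT dk).
have : \sum_(x : 'F_q) x ^+ k = a ^+ k * \sum_(x : 'F_q) x ^+ k.
  rewrite {1}(reindex_inj (mulfI a0)) /= mulr_sumr.
  by apply: eq_bigr => x _; rewrite exprMn.
move/eqP; rewrite -subr_eq0 -{1}(mul1r (\sum_x _)) -mulrBl mulf_eq0.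
by rewrite subr_eq0 eq_sym (negbTE ak) /= => /eqP.
Qed.

Lemma sum_ord_Fp q (pq : prime q) (R : nmodType) (f : 'F_q -> R) :
  \sum_(0 <= i < q) f i%:R = \sum_(a : 'F_q) f a.
Proof.
rewrite -{1}(Fp_cast pq) big_mkord; apply: eq_bigr => i _.
by rewrite natr_Zp.
Qed.
Lemma periodic q (pq : prime q) (R : pzSemiRingType) (f : 'F_q -> R) m :
  \sum_(0 <= i < q * m) f i%:R = m%:R * \sum_(0 <= i < q) f i%:R.
Proof.
elim: m => [|m IH]; first by rewrite muln0 big_geq // mul0r.
rewrite mulnS addnC (big_cat_nat _ (leq_addr q (q * m))) //= IH.
rewrite -[X in \big[_/_]_(X <= _ < _ + q) _](add0n (q * m)%N) big_addn addKn.
rewrite (eq_bigr (fun i => f i%:R)); last first.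
  by move=> i _; rewrite natrD natrM pchar_Fp_0 // mul0r addr0.
by rewrite mulrS mulrDl mul1r addrC.
Qed.

Lemma S_Fp q (pq : prime q) n : (0 < n)%N -> (q %| n)%N ->
  (S n n)%:R = (n %/ q)%:R * \sum_(a : 'F_q) a ^+ n :> 'F_q.
Proof.
move=> n0 qn; rewrite /S natr_sum (eq_bigr (fun i => (i%:R : 'F_q) ^+ n)); last first.
  by move=> i _; rewrite natrX.
have nq : (n%:R : 'F_q) = 0 by rewrite -Fp_nat_mod // (eqP qn).
rewrite big_nat_recr //= nq expr0n gtn_eqF // addr0.
have : \sum_(0 <= i < n) (i%:R : 'F_q) ^+ n = \sum_(1 <= i < n) (i%:R : 'F_q) ^+ n.
  by rewrite big_ltn // expr0n gtn_eqF // add0r.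
move <-; rewrite -(@sum_ord_Fp q pq _ (fun a => a ^+ n)) -(@periodic q pq _ (fun a => a ^+ n)) mulnC divnK //.
Qed.

Lemma key q (pq : prime q) n : (0 < n)%N -> (q %| n)%N ->
  (S n n)%:R = if (q.-1 %| n)%N then - (n %/ q)%:R else 0 :> 'F_q.
Proof.
move=> n0 qn; rewrite S_Fp // sum_pow //.
by case: ifP; rewrite ?mulrN1 ?mulr0.
Qed.
End RingPart.
Lemma sqf_dvd m N : 0 < m -> (forall r, prime r -> r %| m -> ~~ (r * r %| m)) ->
  (forall r, prime r -> r %| m -> r %| N) -> m %| N.
Proof.
move=> m0 sq pr; apply/negPn/negP => nmN.
set g := gcdn m N.
have gm : g %| m by exact: dvdn_gcdl.
have g0 : 0 < g by rewrite gcdn_gt0 m0.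
have gne : g != m by apply: contra nmN => /eqP <-; exact: dvdn_gcdr.
have mg1 : 1 < m %/ g.
  have := dvdn_leq m0 gm; have := divnK gm; case: (m %/ g) => [|[|k]] //.
    by move=> <-; rewrite mul0n; lia.
  by move=> E; move: gne; rewrite -E mul1n eqxx.
set r := pdiv (m %/ g).
have pr_r : prime r by exact: pdiv_prime.
have rmg : r %| m %/ g by exact: pdiv_dvd.
have rgm : r * g %| m by rewrite -dvdn_divRL.
have rm : r %| m by apply: dvdn_trans rgm; exact: dvdn_mulr.
have rg : r %| g by rewrite dvdn_gcd rm pr.
have := sq r pr_r rm; rewrite (dvdn_trans _ rgm) //.
by rewrite dvdn_pmul2l ?prime_gt0.
Qed.
Lemma all1 : all (fun d => prime d.+1 ==> (d.+1 \in [:: 2;3;7;43])) (divisors 1806).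
Proof. vm_compute. reflexivity. Qed.
Lemma cX q : prime q -> q.-1 %| 1806 -> q \in [:: 2;3;7;43].
Proof.
move=> pq; rewrite (dvdn_divisors _ (isT : 0 < 1806)) => Hd.
by move/allP: all1 => /(_ _ Hd); rewrite (prednK (prime_gt0 pq)) => /implyP/(_ pq).
Qed.

Lemma all2 : all (fun d => all (fun q => q.-1 %| d) (primes d) ==> (d \in [::1;2;6;42;1806])) (divisors 1806).
Proof. vm_compute. reflexivity. Qed.
Lemma c2 d : d %| 1806 -> all (fun q => q.-1 %| d) (primes d) -> d \in [::1;2;6;42;1806].
Proof.
rewrite (dvdn_divisors _ (isT : 0 < 1806)) => Hd.
by move/allP: all2 => /(_ _ Hd) /implyP.
Qed.

Lemma all3 : all (fun n => all (fun r => (r %| n) ==> (r %| n %/ r + 1)) [::2;3;7;43]) [::1;2;6;42;1806].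
Proof. vm_compute. reflexivity. Qed.
Lemma c3 n r : n \in [::1;2;6;42;1806] -> r \in [::2;3;7;43] -> r %| n -> r %| n %/ r + 1.
Proof. by move=> Hn Hr; move/allP: all3 => /(_ _ Hn)/allP/(_ _ Hr)/implyP. Qed.

Lemma all4 : all (fun n => all (fun r => [&& r.-1 %| n, ~~(r*r %| n) & (r %| n%/r + 1)]) (primes n)) [::1;2;6;42;1806].
Proof. vm_compute. reflexivity. Qed.
Lemma c4 n r : n \in [::1;2;6;42;1806] -> r \in primes n -> [&& r.-1 %| n, ~~(r*r %| n) & (r %| n%/r + 1)].
Proof. by move=> Hn Hr; move/allP: all4 => /(_ _ Hn)/allP/(_ _ Hr). Qed.

Lemma all5 : all (fun r => r %| 1806) [::2;3;7;43].
Proof. vm_compute. reflexivity. Qed.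
Lemma c5 r : r \in [::2;3;7;43] -> r %| 1806.
Proof. by move=> Hr; move/allP: all5 => /(_ _ Hr). Qed.

Lemma all6 : all (fun n => 0 < n) [::1;2;6;42;1806].
Proof. vm_compute. reflexivity. Qed.
Lemma c6 n : n \in [::1;2;6;42;1806] -> 0 < n.
Proof. by move=> Hn; move/allP: all6 => /(_ _ Hn). Qed.
Lemma S_ge1 n : 0 < n -> 1 <= S n n.
Proof. by move=> n0; rewrite /S big_ltn // exp1n leq_addr. Qed.

Lemma fact1 p n q : prime p -> 0 < n -> S n n = p %[mod n] -> ~~ (p %| n) ->
  prime q -> q %| n ->
  [/\ q.-1 %| n, ~~ (q %| n %/ q) & ((p%:R : 'F_q) = - (n %/ q)%:R)%R].
Proof.
move=> pp n0 H pn pq qn.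
have Hq : S n n = p %[mod q] by rewrite -(modn_dvdm _ qn) H modn_dvdm.
have E : ((S n n)%:R = p%:R :> 'F_q)%R by apply/eqP; rewrite Fp_eq // Hq.
have p0 : ((p%:R : 'F_q) != 0)%R.
  rewrite -[X in _ != X]/(0%:R)%R Fp_eq // mod0n; apply: contra pn => H0.
  have qp : q %| p := H0.
  by move: qp; rewrite dvdn_prime2 // => /eqP <-.
move: E; rewrite key //; case: ifP => [dq E|_ E]; last by move: p0; rewrite -E eqxx.
split => //.
apply: contra p0 => nq0.
by rewrite -E -Fp_nat_mod // (eqP nq0) oppr0.
Qed.
Theorem mainTheorem3 (p : nat) : prime p ->
  forall n : nat,
    inM0 p n = (n \in [:: 1; 2; 6; 42; 1806]) && (p == 1 %[mod n]).
Proof.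
move=> pp n; rewrite /inM0 /inM.
case: (posnP n) => [->|n0]; first by [].
rewrite /=.
have p0 := prime_gt0 pp.
apply/idP/idP.
- case/andP => /eqP H pn.
  have F2 : forall q, prime q -> q %| n -> q \in [:: 2;3;7;43].
    elim/ltn_ind => q IH pq qn.
    have [dq _ _] := fact1 _ _ _ pp n0 H pn pq qn.
    have q1 : 0 < q.-1 by have := prime_gt1 pq; lia.
    apply: cX => //.
    apply: sqf_dvd => // r pr rq.
      have rn := dvdn_trans rq dq.
      have [_ nr _] := fact1 _ _ _ pp n0 H pn pr rn.
      apply: contra nr => rr; rewrite dvdn_divRL //; exact: dvdn_trans rr dq.
    have rlt : r < q by have := dvdn_leq q1 rq; have := prime_gt1 pq; lia.
    exact: (c5 _ (IH r rlt pr (dvdn_trans rq dq))).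
  have nD : n %| 1806.
    apply: sqf_dvd => // r pr rn.
      by have [_ nr _] := fact1 _ _ _ pp n0 H pn pr rn; rewrite -dvdn_divRL.
    exact: (c5 _ (F2 r pr rn)).
  have Hn : n \in [::1;2;6;42;1806].
    apply: c2 => //.
    apply/allP => q; rewrite mem_primes => /and3P[pq _ qn].
    by have [] := fact1 _ _ _ pp n0 H pn pq qn.
  rewrite Hn /=.
  rewrite eqn_mod_dvd //.
  apply: sqf_dvd => // r pr rn.
    by have [_ nr _] := fact1 _ _ _ pp n0 H pn pr rn; rewrite -dvdn_divRL.
  have [_ _ E] := fact1 _ _ _ pp n0 H pn pr rn.
  have rd := c3 _ _ Hn (F2 r pr rn) rn.
  have X : ((((n %/ r) + 1)%:R : 'F_r) = 0)%R by rewrite -Fp_nat_mod // (eqP rd).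
  have E1 : ((p%:R : 'F_r) = 1%:R)%R.
    by move: X; rewrite natrD => /eqP; rewrite addr_eq0 => /eqP X2; rewrite E X2 opprK.
  by move: E1 => /eqP; rewrite Fp_eq // eqn_mod_dvd.
- case/andP => Hn; rewrite eqn_mod_dvd // => Hd.
  apply/andP; split.
    have S1 : S n n == 1 %[mod n].
      rewrite eqn_mod_dvd ?S_ge1 //.
      apply: sqf_dvd => // r pr rn;
        (have rP : r \in primes n by rewrite mem_primes pr n0 rn);
        have /and3P[dr sq rd] := c4 _ _ Hn rP => //.
      have := @key r pr n n0 rn; rewrite dr => E.
      have X : ((((n %/ r) + 1)%:R : 'F_r) = 0)%R by rewrite -Fp_nat_mod // (eqP rd).
      have E1 : (((S n n)%:R : 'F_r) = 1%:R)%R.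
        by move: X; rewrite natrD => /eqP; rewrite addr_eq0 => /eqP X2; rewrite E X2 opprK.
      by move: E1 => /eqP; rewrite Fp_eq // eqn_mod_dvd // S_ge1.
    by rewrite (eqP S1) eq_sym eqn_mod_dvd.
  apply/negP => pn.
  have := dvdn_leq n0 pn; have := prime_gt1 pp.
  have : 0 < p - 1 by have := prime_gt1 pp; lia.
  move/dvdn_leq/(_ Hd); lia.
Qed.
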